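(* Let $G$ be a finite simple graph with a clique vertex-partition $\Pi=\{W_1,\dots,W_p\}$, and let $t\ge 2$ be an integer. Then (1) $\dim \mathrm{CF}_t(G(\Pi,t)) = p(t-1)-1$, and (2) $\mathrm{CF}_t(G(\Pi,t))$ is pure.
   Context: A clique vertex-partition of $G$ is a collection $\Pi=\{W_1,\dots,W_p\}$ of pairwise disjoint (possibly empty) vertex sets each inducing a clique in $G$, whose union is $V(G)$. The $t$-clique whiskering $G(\Pi,t)$ is obtained from $G$ by adding, for each $1\le i\le p$, $t-1$ new distinct vertices $x_{i,1},\dots,x_{i,t-1}$ (all new vertices distinct from each other and from $V(G)$) and adding edges so that $W_i\cup\{x_{i,1},\dots,x_{i,t-1}\}$ becomes a clique; no other edges are added. $\mathrm{CF}_t(\cdot)$ is the simplicial complex on the vertex set whose faces are the vertex subsets inducing no clique on $t$ vertices. The dimension of a complex is the maximum of $|F|-1$ over faces $F$; a complex is pure if all facets have the same dimension. *)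

(* Defs.v *)
From mathcomp Require Import all_boot all_order all_algebra.
Set Implicit Arguments. Unset Strict Implicit. Unset Printing Implicit Defensive.

Section Defs.
Variable T : finType.

Definition simple_graph (e : rel T) : Prop := symmetric e /\ irreflexive e.

Definition is_clique (e : rel T) (S : {set T}) : bool :=
  [forall x in S, forall y in S, (x != y) ==> e x y].

Definition CF_face (t : nat) (e : rel T) (F : {set T}) : bool :=
  ~~ [exists S : {set T}, [&& S \subset F, #|S| == t & is_clique e S]].

Definition cx_dim (face : pred {set T}) : int :=
  ((\max_(F : {set T} | face F) #|F|)%:Z - 1)%R.

Definition cx_facet (face : pred {set T}) (F : {set T}) : bool :=
  maxset face F.

Definition cx_pure (face : pred {set T}) : Prop :=
  forall F1 F2, cx_facet face F1 -> cx_facet face F2 -> #|F1| = #|F2|.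

End Defs.


Section Whisker.
Variables (V : finType) (p t : nat).

(* Clique vertex-partition Pi = {W_1,...,W_p} (blocks possibly empty). *)
Definition clique_vertex_partition (e : rel V) (W : 'I_p -> {set V}) : Prop :=
  [/\ forall i j, i != j -> [disjoint W i & W j],
      forall i, is_clique e (W i) &
      \bigcup_(i < p) W i = [set: V]].

(* Vertex set of G(Pi,t): V plus new vertices x_{i,j}, i < p, j < t-1. *)
Definition whisk_vertex : finType := (V + ('I_p * 'I_t.-1))%type.

Definition whisk_rel (e : rel V) (W : 'I_p -> {set V}) : rel whisk_vertex :=
  fun a b =>
    match a, b with
    | inl u, inl v => e u v
    | inl u, inr (i, _) => u \in W i
    | inr (i, _), inl v => v \in W i
    | inr (i, j), inr (i', j') => (i == i') && (j != j')
    end.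

End Whisker.
Arguments whisk_rel [V p] t e W.
Arguments whisk_vertex V p t : clear implicits.

(* Main.v *)
Require Import Defs.
From mathcomp Require Import all_boot all_order all_algebra.
From mathcomp Require Import zify.
Set Implicit Arguments. Unset Strict Implicit. Unset Printing Implicit Defensive.

Lemma sub_card (T : finType) n (A : {set T}) : n <= #|A| -> exists2 S : {set T}, S \subset A & #|S| = n.
Proof.
elim: n => [|n IH] H; first by exists set0; rewrite ?sub0set ?cards0.
have [S SA cS] := IH (ltnW H).
have : 0 < #|A :\: S| by rewrite cardsD (setIidPr SA) cS subn_gt0.
case/card_gt0P => x; rewrite inE => /andP [xS xA].
exists (x |: S); first by rewrite subUset sub1set xA SA.
by rewrite cardsU1 xS cS.
Qed.

Lemma clique_sub (T : finType) (r : rel T) (A B : {set T}) : A \subset B -> is_clique r B -> is_clique r A.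
Proof.
move=> AB /forallP H; apply/forallP => x; apply/implyP => xA; apply/forallP => y; apply/implyP => yA.
by have /implyP := H x; move/(_ (subsetP AB _ xA))/forallP/(_ y)/implyP/(_ (subsetP AB _ yA)).
Qed.

Section S.
Variables (V : finType) (e : rel V) (p : nat) (W : 'I_p -> {set V}) (t : nat).
Hypothesis Hg : simple_graph e.
Hypothesis HW : clique_vertex_partition e W.
Hypothesis Ht : 2 <= t.

Let X := whisk_vertex V p t.
Let r := whisk_rel t e W.

Definition blk (i : 'I_p) : {set X} :=
  [set a : X | match a with inl v => v \in W i | inr (i', _) => i' == i end].
Definition wh (i : 'I_p) : {set X} := [set (inr (i, j) : X) | j : 'I_t.-1].
Definition allwh : {set X} := [set a : X | if a is inr _ then true else false].

Lemma card_wh i : #|wh i| = t.-1.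
Proof. rewrite card_imset ?card_ord // => j k [] //. Qed.

Lemma wh_blk i : wh i \subset blk i.
Proof. by apply/subsetP => a /imsetP [j _ ->]; rewrite inE. Qed.

Lemma allwh_blk i : allwh :&: blk i = wh i.
Proof.
apply/setP => a; rewrite !inE; case: a => [v|[i' j]] /=; first by apply/esym/imsetP => -[? _].
apply/idP/imsetP => [/eqP -> | [k _ [-> _]]]; first by exists j.
by [].
Qed.

Lemma blk_clique i : is_clique r (blk i).
Proof.
case: HW => _ Hc _.
apply/forallP => a; apply/implyP; rewrite inE => Ha; apply/forallP => b; apply/implyP; rewrite inE => Hb.
apply/implyP => ab.
case: a b Ha Hb ab => [u|[i1 j1]] [v|[i2 j2]] //= Ha Hb ab.
- have /forallP/(_ u)/implyP/(_ Ha)/forallP/(_ v)/implyP/(_ Hb)/implyP := Hc i.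
  by apply; apply: contraNneq ab => ->.
- by move/eqP: Hb => ->.
- by move/eqP: Ha => ->.
- move/eqP: Ha Hb ab => -> /eqP -> ab; rewrite eqxx /=.
  by apply: contraNneq ab => ->.
Qed.

Lemma clique_wh (S : {set X}) i j : is_clique r S -> inr (i, j) \in S -> S \subset blk i.
Proof.
move=> /forallP /(_ (inr (i, j))) /implyP H ijS; move/H/forallP: ijS => H2.
apply/subsetP => b bS; move/implyP: (H2 b) => /(_ bS).
case: (eqVneq (inr (i, j)) b) => [<- _|_ /= Hr]; first by rewrite inE.
rewrite inE; case: b bS Hr => [v|[i' j']] //= _.
by move=> H0; case/andP: H0 => /eqP -> _.
Qed.

Lemma blk_unique (a : X) : \sum_(i < p) (a \in blk i) = 1.
Proof.
case: HW => Hd _ Hcov.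
have [i0 Hi0] : exists i0, a \in blk i0.
  case: a => [v|[i j]]; last by exists i; rewrite inE.
  have : v \in \bigcup_(i < p) W i by rewrite Hcov inE.
  by case/bigcupP => i _ Hv; exists i; rewrite inE.
rewrite (bigD1 i0) //= Hi0 big1 // => i Hi.
apply/eqP; rewrite eqb0; apply/negP => Ha.
move: Hi0 Ha; rewrite !inE; case: a => [v|[i' j]] H1 H2.
- by move: (Hd _ _ Hi) => /disjointFr /(_ H2); rewrite H1.
- by move/eqP: H1 H2 Hi => -> /eqP ->; rewrite eqxx.
Qed.

Lemma card_sum (F : {set X}) : #|F| = \sum_(i < p) #|F :&: blk i|.
Proof.
rewrite -sum1_card.
transitivity (\sum_(a in F) \sum_(i < p) (a \in blk i)).
  by apply: eq_bigr => a _; rewrite blk_unique.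
rewrite exchange_big; apply: eq_bigr => i _.
rewrite -sum1_card big_mkcond [RHS]big_mkcond; apply: eq_bigr => a _.
by rewrite !inE; case: (a \in F); case: (a \in blk i).
Qed.

Lemma face_blk (F : {set X}) i : CF_face t r F -> #|F :&: blk i| <= t.-1.
Proof.
move=> HF; rewrite leqNgt -ltnS prednK ?(leq_trans _ Ht) //; apply/negP => H.
have [S SF cS] := sub_card (H : t <= _).
move/negP: HF; apply; apply/existsP; exists S.
rewrite (subset_trans SF) ?subsetIl // cS eqxx /=.
exact: clique_sub (subset_trans SF (subsetIr _ _)) (blk_clique i).
Qed.

Lemma face_le (F : {set X}) : CF_face t r F -> #|F| <= p * t.-1.
Proof.
move=> HF; rewrite card_sum -[p in p * _]card_ord -sum_nat_const.
by apply: leq_sum => i _; apply: face_blk.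
Qed.

Lemma allwh_face : CF_face t r allwh.
Proof.
apply/negP => /existsP [S /and3P [SX /eqP cS cl]].
have : 0 < #|S| by rewrite cS (leq_trans _ Ht).
case/card_gt0P => a aS.
have := subsetP SX _ aS; rewrite inE; case: a aS => [//|[i j]] aS _.
have : S \subset wh i by rewrite -allwh_blk subsetI SX (clique_wh cl aS).
move/subset_leq_card; rewrite card_wh cS.
by case: t Ht => [|n]; rewrite //= ltnn.
Qed.

Lemma card_allwh : #|allwh| = p * t.-1.
Proof.
rewrite card_sum -[p in p * _]card_ord -sum_nat_const.
by apply: eq_bigr => i _; rewrite allwh_blk card_wh.
Qed.

Lemma facet_card (F : {set X}) : cx_facet (CF_face t r) F -> #|F| = p * t.-1.
Proof.
move=> /maxsetP [HF Hmax].
rewrite card_sum -[p in p * _]card_ord -sum_nat_const.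
apply: eq_bigr => i _; apply/eqP; rewrite eqn_leq face_blk //=.
rewrite leqNgt; apply/negP => Hlt.
have : ~~ (wh i \subset F).
  apply/negP => Hs; have := subset_leq_card (setSI (blk i) Hs).
  by rewrite (setIidPl (wh_blk i)) card_wh leqNgt Hlt.
case/subsetPn => a ai aF.
have Hf : CF_face t r (a |: F).
  apply/negP => /existsP [S /and3P [SF /eqP cS cl]].
  case: (boolP (a \in S)) => aS.
  - move/imsetP: ai aS => [j _ ->] aS.
    have := clique_wh cl aS => Sb.
    have : S \subset a |: (F :&: blk i).
      apply/subsetP => b bS; move: (subsetP SF _ bS) (subsetP Sb _ bS); rewrite !inE.
      by case/orP => [->|->] ->; rewrite ?orbT.
    move/subset_leq_card; rewrite cardsU1 cS.
    move: Hlt; case: (a \in F :&: blk i) => /=; move: (prednK (ltnW Ht)); move: #|F :&: blk i| => c; move: (t.-1) => q; lia.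
  - move/negP: HF; apply; apply/existsP; exists S; apply/and3P; split; rewrite ?cS //.
    apply/subsetP => b bS; move: (subsetP SF _ bS); idtac.
    by rewrite in_setU1; case/orP => // /eqP Hb; move: aS; rewrite -Hb bS.
have := Hmax _ Hf (subsetUr _ _) => /eqP; rewrite eqEsubset => /andP [H _].
by move/subsetP: H => /(_ a); rewrite !inE eqxx (negbTE aF) => /(_ isT).
Qed.

End S.

Unset Implicit Arguments.
Theorem theorem4p8 (V : finType) (e : rel V) (p : nat) (W : 'I_p -> {set V})
    (t : nat) :
  simple_graph e ->
  clique_vertex_partition e W ->
  2 <= t ->
  cx_dim (CF_face t (whisk_rel t e W)) = ((p * (t - 1))%:Z - 1)%R /\
  cx_pure (CF_face t (whisk_rel t e W)).
Proof.
move=> Hg HW Ht; rewrite subn1; split.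
- rewrite /cx_dim; congr (_ - _)%R; congr Posz.
  apply/eqP; rewrite eqn_leq; apply/andP; split.
  + by apply/bigmax_leqP => F HF; apply: (face_le HW Ht).
  + by rewrite -(card_allwh t HW); apply: leq_bigmax_cond; apply: (allwh_face e W Ht).
- by move=> F1 F2 H1 H2; rewrite (facet_card HW Ht H1) (facet_card HW Ht H2).
Qed.
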